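(* Let $F\in k[[X,Y]]$ be $k$-distinguished of $Y$-degree $N\ge0$ and let $G\in k[[X,Y]]$ with $G(0,0)=0$. Then $\alpha(F,G)\subset\{0\}$ and $\beta(F,G)=0$.
   Context: Let $k$ be an algebraically closed field of characteristic zero, $R=k((X))[Y]$, and $R^{\natural}$ the set of monic irreducible polynomials of positive degree in $Y$ over $k((X))$. An element $F\in R$ is $k$-distinguished if it is of the form $F=F_0Y^N+\sum_{i<N}a_i(X)Y^i$ with $0\ne F_0\in k$ and each $a_i\in k((X))$ of positive $X$-order; such $F$ lies in $k[[X,Y]]$. Write $F=F_0\prod_{j=1}^{\chi(F)}F_j$ with $F_j\in R^{\natural}$. For nonzero $H\in R$ and $G\in R$ (with $M=\deg_YG$) the intersection multiplicity is $\mathrm{int}(H,G)=M\,\mathrm{ord}_XH_0+\frac1\nu\sum_i\mathrm{ord}_XG(X^\nu,z_i(X))$, where $H_0$ is the leading $Y$-coefficient of $H$ and $H(X^\nu,Y)=H_0(X^\nu)\prod_i(Y-z_i(X))$ with $z_i\in k((X))$ for a suitable integer $\nu>0$ ($\mathrm{ord}_X0=\infty$; for $G=0$, $\mathrm{int}(H,0)$ is $0$ if $H\in k((X))$ and $\infty$ otherwise). For $\Phi\in R^{\natural}$, $\mathrm{res}(\Phi,G)$ is the unique $\lambda\in k$ with $\mathrm{int}(\Phi,G-\lambda)>0$ if $\mathrm{int}(\Phi,G)\ge0$, and $\infty$ otherwise. For $\lambda\in k$: $\alpha_\lambda(F,G)=\{j:\mathrm{res}(F_j,G)=\lambda\}$,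 $\beta_\lambda(F,G)=\sum_{j\in\alpha_\lambda(F,G)}\mathrm{int}(F_j,G-\lambda)$, $\alpha(F,G)=\{\lambda\in k:\alpha_\lambda(F,G)\ne\emptyset\}$, $\beta(F,G)=\sum_{0\ne\lambda\in\alpha(F,G)}\beta_\lambda(F,G)$. *)

(* Defs.v *)
From HB Require Import structures.
From mathcomp Require Import boolp.
From mathcomp Require Import all_boot all_order all_algebra.
From mathcomp Require Import zify.

Set Implicit Arguments.
Unset Strict Implicit.
Unset Printing Implicit Defensive.

Import Order.TTheory GRing.Theory Num.Theory.
Local Open Scope ring_scope.

Section PowerSeries.
Variable K : idomainType.

Record ps := PS { psc : nat -> K }.

HB.instance Definition _ := [isNew for psc].
HB.instance Definition _ := [Choice of ps by <:].

Lemma psP (a b : ps) : (forall n, psc a n = psc b n) -> a = b.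
Proof.
by case: a b => [a] [b] /= h; congr PS; apply: functional_extensionality_dep.
Qed.

Definition ps0 := PS (fun _ => 0).
Definition ps1 := PS (fun n => (n == 0%N)%:R).
Definition psadd (a b : ps) := PS (fun n => psc a n + psc b n).
Definition psopp (a : ps) := PS (fun n => - psc a n).
Definition psmul (a b : ps) :=
  PS (fun n => \sum_(j < n.+1) psc a j * psc b (n - j)).

Lemma psaddA : associative psadd.
Proof. by move=> a b c; apply: psP => n /=; rewrite addrA. Qed.
Lemma psaddC : commutative psadd.
Proof. by move=> a b; apply: psP => n /=; rewrite addrC. Qed.
Lemma psadd0 : left_id ps0 psadd.
Proof. by move=> a; apply: psP => n /=; rewrite add0r. Qed.
Lemma psaddN : left_inverse ps0 psopp psadd.
Proof. by move=> a; apply: psP => n /=; rewrite addNr. Qed.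

HB.instance Definition _ := GRing.isZmodule.Build ps psaddA psaddC psadd0 psaddN.

Definition pstrunc n (a : ps) : {poly K} := \poly_(i < n.+1) psc a i.

Lemma pstruncE n (a : ps) i : (i <= n)%N -> (pstrunc n a)`_i = psc a i.
Proof. by move=> hi; rewrite coef_poly ltnS hi. Qed.

Lemma coefM_low (p q r : {poly K}) n :
  (forall i, (i <= n)%N -> q`_i = r`_i) -> (p * q)`_n = (p * r)`_n.
Proof.
move=> h; rewrite !coefM; apply: eq_bigr => j _; rewrite h //.
exact: leq_subr.
Qed.

Lemma psmulE (a b : ps) n i : (i <= n)%N ->
  psc (psmul a b) i = (pstrunc n a * pstrunc n b)`_i.
Proof.
move=> hi; rewrite coefM /=; apply: eq_bigr => j _.
have hj : (j <= n)%N by rewrite -ltnS (leq_trans (ltn_ord j)).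
by rewrite !pstruncE // (leq_trans (leq_subr _ _)).
Qed.

Lemma psmulA : associative psmul.
Proof.
move=> a b c; apply: psP => n.
rewrite (psmulE _ _ (leqnn n)) (psmulE _ _ (leqnn n)).
have -> : (pstrunc n a * pstrunc n (psmul b c))`_n =
          (pstrunc n a * (pstrunc n b * pstrunc n c))`_n.
  by apply: coefM_low => i hi; rewrite pstruncE // (psmulE _ _ hi).
have -> : (pstrunc n (psmul a b) * pstrunc n c)`_n =
          (pstrunc n c * (pstrunc n a * pstrunc n b))`_n.
  rewrite mulrC; apply: coefM_low => i hi.
  by rewrite pstruncE // (psmulE _ _ hi).
by rewrite mulrA (mulrC (pstrunc n c)).
Qed.

Lemma psmulC : commutative psmul.
Proof.
by move=> a b; apply: psP => n; rewrite !(psmulE _ _ (leqnn n)) mulrC.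
Qed.

Lemma pstrunc1 n : pstrunc n ps1 = 1.
Proof.
apply/polyP => i; rewrite coef_poly coefC /=.
by case: i => [|i] //=; case: ifP.
Qed.

Lemma psmul1 : left_id ps1 psmul.
Proof.
by move=> a; apply: psP => n; rewrite (psmulE _ _ (leqnn n)) pstrunc1 mul1r
   pstruncE.
Qed.

Lemma pstruncD n (a b : ps) : pstrunc n (psadd a b) = pstrunc n a + pstrunc n b.
Proof. by apply/polyP => i; rewrite coefD !coef_poly; case: ifP; rewrite ?addr0. Qed.

Lemma psmulDl : left_distributive psmul psadd.
Proof.
move=> a b c; apply: psP => n.
rewrite [LHS](psmulE _ _ (leqnn n)) pstruncD mulrDl coefD.
by rewrite -!(psmulE _ _ (leqnn n)).
Qed.

Lemma ps1_neq0 : ps1 != 0.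
Proof.
apply/eqP => /(congr1 (fun a => psc a 0)) /= /eqP; by rewrite oner_eq0.
Qed.

HB.instance Definition _ :=
  GRing.Zmodule_isComNzRing.Build ps psmulA psmulC psmul1 psmulDl ps1_neq0.

Definition psunit : {pred ps} := fun x => `[< exists y : ps, y * x = 1 >].
Definition psinv (x : ps) : ps :=
  match pselect (exists y : ps, y * x = 1) with
  | left h => proj1_sig (cid h)
  | right _ => x
  end.

Lemma psmulV : {in psunit, left_inverse 1 psinv *%R}.
Proof.
move=> x; rewrite /psunit /psinv; case: pselect => [h _|h].
  by case: (cid h).
by rewrite unfold_in asboolF.
Qed.

Lemma psunitPl (x y : ps) : y * x = 1 -> psunit x.
Proof. by move=> h; apply: asboolT; exists y. Qed.

Lemma psinv_out : {in [predC psunit], psinv =1 id}.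
Proof.
move=> x; rewrite inE /psinv; case: pselect => // h.
by rewrite /psunit unfold_in asboolT.
Qed.

HB.instance Definition _ :=
  GRing.ComNzRing_hasMulInverse.Build ps psmulV psunitPl psinv_out.

Lemma ps_min_nz (x : ps) : x != 0 ->
  exists m, psc x m != 0 /\ forall i, (i < m)%N -> psc x i = 0.
Proof.
move=> hx.
have ex : exists n, psc x n != 0.
  apply: contrapT => h; move/eqP: hx => hx; apply: hx; apply: psP => n /=.
  by apply/eqP; apply: contrapT => hn; apply: h; exists n; apply/negP.
case: (ex_minnP ex) => m hm hmin; exists m; split => // i him.
by apply/eqP; apply: contraTT him => hi; rewrite -leqNgt hmin.
Qed.

Lemma ps_integral : GRing.integral_domain_axiom ps.
Proof.
move=> x y hxy; apply: contrapT => /negP; rewrite negb_or => /andP[hx hy].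
have [m [hm hmi]] := ps_min_nz hx; have [n [hn hni]] := ps_min_nz hy.
have := congr1 (fun a => psc a (m + n)) hxy => /=.
have hm' : (m < (m + n).+1)%N by rewrite ltnS leq_addr.
rewrite (bigD1 (Ordinal hm')) //= big1.
  by rewrite addr0 addKn => /eqP; rewrite mulf_eq0 (negPf hm) (negPf hn).
move=> j /eqP hj; case: (ltngtP j m) => [hlt|hgt|heq].
- by rewrite hmi ?mul0r.
- have hj' : (m + n - j < n)%N.
    have := ltn_ord j; move: hgt; clear; lia.
  by rewrite (hni _ hj') mulr0.
- by exfalso; apply: hj; apply: val_inj.
Qed.

HB.instance Definition _ := GRing.ComUnitRing_isIntegral.Build ps ps_integral.

End PowerSeries.

Notation laurent K := {fraction (ps K)}.

Section Laurent.
Variable K : idomainType.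
Local Notation L := (laurent K).
Local Notation "x %:F" := (@FracField.tofrac (ps K) x).

(* X-order of a power series (None encodes ord 0 = +oo) *)
Definition ps_ord (a : ps K) : option nat :=
  match pselect (exists n, psc a n != 0) with
  | left h => Some (@ex_minn (fun n => psc a n != 0) h)
  | right _ => None
  end.

(* X-order of a Laurent series, computed on a representative n/d
   (None encodes ord_X 0 = +oo) *)
Definition ordX (x : L) : option int :=
  let r := repr x in
  match ps_ord \n_r, ps_ord \d_r with
  | Some a, Some b => Some (a%:Z - b%:Z)
  | _, _ => None
  end.

Definition ps_subst (nu : nat) (a : ps K) : ps K :=
  PS (fun n => if (nu %| n)%N then psc a (n %/ nu)%N else 0).

Definition substX (nu : nat) (x : L) : L :=
  let r := repr x in (ps_subst nu \n_r)%:F / (ps_subst nu \d_r)%:F.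

Definition ps_cst (c : K) : ps K := PS (fun n => if n == 0%N then c else 0).
Definition cstL (c : K) : L := (ps_cst c)%:F.

Definition in_psX (x : L) : Prop := exists a : ps K, x = a%:F.

(* Extended rationals Q u {+oo}  (None = +oo)                               *)
Definition ext := option rat.
Definition ext_add (u v : ext) : ext :=
  match u, v with Some a, Some b => Some (a + b) | _, _ => None end.
Definition ext_sum (s : seq ext) : ext := foldr ext_add (Some 0) s.
Definition ext_ge0 (u : ext) : bool := if u is Some a then 0 <= a else true.
Definition ext_gt0 (u : ext) : bool := if u is Some a then 0 < a else true.

Definition ordQ (x : L) : ext :=
  match ordX x with Some z => Some (z%:~R) | None => None end.

Definition puiseux_roots (H : {poly L}) (nu : nat) (zs : seq L) : Prop :=
  (0 < nu)%N /\
  map_poly (substX nu) H = substX nu (lead_coef H) *: \prod_(z <- zs) ('X - z%:P).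

(* int(H,G) = M ord_X H_0 + (1/nu) sum_i ord_X G(X^nu, z_i(X)),  M = deg_Y G.
   For G = 0: 0 if H is constant in Y, +oo otherwise.
   (If no Puiseux factorization existed -- which never happens over an
   algebraically closed field of characteristic 0 -- the value is +oo.) *)
Definition intm (H G : {poly L}) : ext :=
  if G == 0 then (if (size H <= 1)%N then Some 0 else None)
  else
  match pselect (exists w : nat * seq L, puiseux_roots H w.1 w.2) with
  | left h =>
      let w := proj1_sig (cid h) in
      let nu := w.1 in let zs := w.2 in
      ext_add
        (match ordQ (lead_coef H) with
         | Some o => Some ((size G).-1%:R * o)
         | None => None end)
        (match ext_sum [seq ordQ ((map_poly (substX nu) G).[z]) | z <- zs] with
         | Some s => Some (s / nu%:R)
         | None => None end)
  | right _ => None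
  end.

Definition res (Phi G : {poly L}) : option K :=
  if ext_ge0 (intm Phi G) then
    match pselect (exists! lam : K, ext_gt0 (intm Phi (G - (cstL lam)%:P))) with
    | left h => Some (proj1_sig (cid h))
    | right _ => None
    end
  else None.

Definition factorization (F : {poly L}) (F0 : L) (Fs : seq {poly L}) : Prop :=
  F = F0 *: \prod_(Phi <- Fs) Phi /\
  (forall Phi, Phi \in Fs -> Phi \is monic /\ irreducible_poly Phi).

Definition alpha_lam (Fs : seq {poly L}) (G : {poly L}) (lam : K) : seq nat :=
  [seq j <- iota 0 (size Fs) | res (nth 0 Fs j) G == Some lam].

Definition beta_lam (Fs : seq {poly L}) (G : {poly L}) (lam : K) : ext :=
  ext_sum [seq intm (nth 0 Fs j) (G - (cstL lam)%:P) | j <- alpha_lam Fs G lam].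

Definition alpha (Fs : seq {poly L}) (G : {poly L}) : seq K :=
  undup (pmap (fun Phi => res Phi G) Fs).

Definition beta (Fs : seq {poly L}) (G : {poly L}) : ext :=
  ext_sum [seq beta_lam Fs G lam | lam <- alpha Fs G & lam != 0].

Definition k_distinguished (F : {poly L}) (N : nat) : Prop :=
  size F = N.+1 /\
  (exists F0 : K, F0 != 0 /\ lead_coef F = cstL F0) /\
  (forall i, (i < N)%N ->
     match ordX F`_i with Some o => 0 < o | None => true end).

(* G in K[[X,Y]] (i.e. G in K[[X]][Y]) with G(0,0) = 0 *)
Definition in_psXY (G : {poly L}) : Prop := forall i, in_psX G`_i.
Definition vanishes_at_origin (G : {poly L}) : Prop :=
  exists a : ps K, G`_0 = a%:F /\ psc a 0 = 0.

End Laurent.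

(* Main.v *)
Require Import Defs.
From HB Require Import structures.
From mathcomp Require Import boolp.
From mathcomp Require Import all_boot all_order all_algebra.
From mathcomp Require Import zify generic_quotient.

Set Implicit Arguments.
Unset Strict Implicit.
Unset Printing Implicit Defensive.
Import Order.TTheory GRing.Theory Num.Theory.
Local Open Scope ring_scope.
Local Open Scope quotient_scope.

Section PS.
Variable K : idomainType.
Local Notation ps := (ps K).

Definition psord (a : ps) : nat :=
  match pselect (exists n, psc a n != 0) with
  | left h => ex_minn h
  | right _ => 0%N end.

Lemma ps_exnz (a : ps) : a != 0 -> exists n, psc a n != 0.
Proof.
move=> ha; apply: contrapT => h; move/eqP: ha; apply; apply: psP => n /=.
by apply/eqP; apply: contrapT => hn; apply: h; exists n; apply/negP.
Qed.

Lemma psordP (a : ps) : a != 0 ->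
  psc a (psord a) != 0 /\ forall i, (i < psord a)%N -> psc a i = 0.
Proof.
move=> ha; rewrite /psord; case: pselect => [h|h]; last by case: h; apply: ps_exnz.
case: ex_minnP => m hm hmin; split => // i him.
by apply/eqP; apply: contraTT him => hi; rewrite -leqNgt hmin.
Qed.

Lemma psord_ge (a : ps) m : a != 0 -> (forall i, (i < m)%N -> psc a i = 0) ->
  (m <= psord a)%N.
Proof.
move=> ha h; have [h1 _] := psordP ha; rewrite leqNgt.
apply/ssrbool.negP => hl.
by move: h1; rewrite h ?eqxx.
Qed.

Lemma psord_eq (a : ps) m : psc a m != 0 -> (forall i, (i < m)%N -> psc a i = 0) ->
  psord a = m.
Proof.
move=> hm hi; have ha : a != 0 by apply: contraNneq hm => ->.
have [h1 h2] := psordP ha; apply/eqP; rewrite eqn_leq; apply/andP; split.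
  by rewrite leqNgt; apply/negP => hl; rewrite h2 ?eqxx in hm.
exact: psord_ge.
Qed.

Lemma ps_ordE (a : ps) : ps_ord a = if a == 0 then None else Some (psord a).
Proof.
rewrite /ps_ord /psord; case: pselect => [h|h]; case: eqP => // ha.
  by case: h => n; rewrite ha /= eqxx.
by case: h; apply: ps_exnz; apply/eqP.
Qed.

Lemma psordM (a b : ps) : a != 0 -> b != 0 -> psord (a * b) = (psord a + psord b)%N.
Proof.
move=> ha hb; have [ma mi] := psordP ha; have [nb ni] := psordP hb.
set m := psord a in ma mi *; set n := psord b in nb ni *.
apply: psord_eq.
  rewrite /= /psmul /=.
  have hm' : (m < (m + n).+1)%N by rewrite ltnS leq_addr.
  rewrite (bigD1 (Ordinal hm')) //= big1.
    by rewrite addr0 addKn mulf_neq0.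
  move=> j /eqP hj; case: (ltngtP j m) => [hlt|hgt|heq].
  - by rewrite mi ?mul0r.
  - have hj' : (m + n - j < n)%N.
      have := ltn_ord j; move: hgt; clear; lia.
    by rewrite (ni _ hj') mulr0.
  - by exfalso; apply: hj; apply: val_inj.
move=> i hi /=; rewrite big1 // => j _.
case: (ltnP j m) => hj; first by rewrite mi ?mul0r.
rewrite ni ?mulr0 //; have := ltn_ord j; move: hi hj; clear; lia.
Qed.

Lemma psord_add (a b : ps) : a != 0 -> b != 0 -> a + b != 0 ->
  (minn (psord a) (psord b) <= psord (a + b)%R)%N.
Proof.
move=> ha hb hab; apply: psord_ge => // i hi.
have [_ h1] := psordP ha; have [_ h2] := psordP hb.
rewrite /= h1 ?h2 ?addr0 //; move: hi; clear; lia.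
Qed.

Lemma psordN (a : ps) : psord (- a) = psord a.
Proof.
have [->|ha] := eqVneq a 0; first by rewrite oppr0.
have [h1 h2] := psordP ha; apply: psord_eq => /=; first by rewrite oppr_eq0.
by move=> i hi; rewrite h2 ?oppr0.
Qed.

Lemma psord1 : psord (1 : ps) = 0%N.
Proof. by apply: psord_eq => //=; rewrite oner_eq0. Qed.


Section Subst.
Variable nu : nat.
Hypothesis nu_gt0 : (0 < nu)%N.
Local Notation sb := (@ps_subst K nu).

Lemma substD (a b : ps) : sb (a + b) = sb a + sb b.
Proof. by apply: psP => n /=; case: ifP; rewrite ?addr0. Qed.

Lemma substN (a : ps) : sb (- a) = - sb a.
Proof. by apply: psP => n /=; case: ifP; rewrite ?oppr0. Qed.

Lemma subst_coef (a : ps) j : psc (sb a) (j * nu) = psc a j.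
Proof. by rewrite /= dvdn_mull // mulnK. Qed.

Lemma subst1 : sb 1 = 1.
Proof.
apply: psP => n /=; case: ifP => h.
  case: (eqVneq n 0%N) => [->|hn]; first by rewrite div0n.
  have : (n %/ nu != 0%N)%N.
    by rewrite -lt0n divn_gt0 // dvdn_leq // lt0n.
  by move/negPf => ->; case: n hn h.
case: (eqVneq n 0%N) => [hn|//]; by rewrite hn dvdn0 in h.
Qed.

Lemma substT (c : ps) i : psc (sb c) i = ((pstrunc i c) \Po 'X^nu)`_i.
Proof.
rewrite coef_comp_poly_Xn //= ; case: ifP => // _.
by rewrite pstruncE // leq_div.
Qed.

Lemma substT' (c : ps) i j : (j <= i)%N ->
  (pstrunc i (sb c))`_j = ((pstrunc i c) \Po 'X^nu)`_j.
Proof.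
move=> hj; rewrite pstruncE // coef_comp_poly_Xn //= ; case: ifP => // _.
by rewrite pstruncE // (leq_trans (leq_div _ _) hj).
Qed.

Lemma substM (a b : ps) : sb (a * b) = sb a * sb b.
Proof.
apply: psP => i.
rewrite [RHS](psmulE _ _ (leqnn i)).
have hb := @substT' b i; have ha := @substT' a i.
rewrite (coefM_low _ hb) (mulrC (pstrunc i (sb a))) (coefM_low _ ha) mulrC -comp_polyM.
rewrite coef_comp_poly_Xn //= ; case: ifP => // _.
by rewrite -(psmulE _ _ (leq_div i nu)).
Qed.

Lemma subst_eq0 (a : ps) : (sb a == 0) = (a == 0).
Proof.
apply/eqP/eqP => [h|->]; last by apply: psP => n /=; case: ifP.
apply: psP => j; rewrite -subst_coef h //.
Qed.

Lemma psord_subst (a : ps) : a != 0 -> psord (sb a) = (psord a * nu)%N.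
Proof.
move=> ha; have [h1 h2] := psordP ha; apply: psord_eq; first by rewrite subst_coef.
move=> i hi /=; case: ifP => // hd; apply: h2.
by rewrite ltn_divLR.
Qed.

End Subst.
End PS.

Section Lau.
Variable K : idomainType.
Local Notation L := (laurent K).
Local Notation "x %:F" := (@FracField.tofrac (ps K) x).
Local Notation ps := (ps K).

Lemma tofracE (a : ps) : a%:F = \pi_L (Ratio a 1).
Proof. by unlock FracField.tofrac. Qed.

Lemma L1 (a b : ps) : b != 0 -> a%:F / b%:F = \pi_L (Ratio a b).
Proof.
move=> hb; apply: (mulIf (x := b%:F)); first by rewrite tofrac_eq0.
rewrite divfK ?tofrac_eq0 // !tofracE.
transitivity (\pi_L (FracField.mulf (Ratio a b) (Ratio b 1))).
  2: exact (@FracField.pi_mul ps (Ratio a b) (Ratio b 1)).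
apply/eqmodP; rewrite /= FracField.equivfE /FracField.mulf !numden_Ratio ?oner_neq0 ?mulf_neq0 ?oner_neq0 //.
by rewrite mulr1 mul1r mulrC.
Qed.

Lemma reprd (x : L) : \d_(repr x) != 0.
Proof. exact: denom_ratioP. Qed.

Lemma reprE (x : L) : x = (\n_(repr x))%:F / (\d_(repr x))%:F.
Proof. by rewrite L1 ?reprd // Ratio_numden reprK. Qed.

Lemma repr_rel (a b : ps) : b != 0 ->
  \n_(repr (a%:F / b%:F)) * b = \d_(repr (a%:F / b%:F)) * a.
Proof.
move=> hb; rewrite L1 //.
have := FracField.equivf_l (Ratio a b).
by rewrite !numden_Ratio.
Qed.

Lemma fr_eq0 (a b : ps) : b != 0 -> (a%:F / b%:F == 0) = (a == 0).
Proof. by move=> hb; rewrite mulf_eq0 invr_eq0 !tofrac_eq0 (negPf hb) orbF. Qed.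

Lemma frac_ex (x : L) : exists a b : ps, b != 0 /\ x = a%:F / b%:F.
Proof. by exists (\n_(repr x)), (\d_(repr x)); split; [apply: reprd | apply: reprE]. Qed.

Definition w (x : L) : int :=
  (psord \n_(repr x))%:Z - (psord \d_(repr x))%:Z.

Lemma wE (a b : ps) : a != 0 -> b != 0 ->
  w (a%:F / b%:F) = (psord a)%:Z - (psord b)%:Z.
Proof.
move=> ha hb; have h := repr_rel a hb; rewrite /w.
set n := \n_(repr _) in h *; set d := \d_(repr _) in h *.
have hd : d != 0 by apply: reprd.
have hn : n != 0 by apply: contraNneq (mulf_neq0 hd ha) => h0; rewrite -h h0 mul0r.
have := congr1 (@psord K) h; rewrite !psordM // => e.
lia.
Qed.

Lemma ordX_w (x : L) : ordX x = if x == 0 then None else Some (w x).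
Proof.
rewrite /ordX !ps_ordE (negPf (reprd x)).
have := reprE x; set n := \n_(repr x); set d := \d_(repr x) => hx.
have -> : (x == 0) = (n == 0) by rewrite {1}hx fr_eq0 // reprd.
by case: ifP.
Qed.

Lemma w_tofrac (a : ps) : a != 0 -> w a%:F = psord a.
Proof.
move=> ha; have -> : a%:F = a%:F / 1%:F by rewrite tofrac1 divr1.
by rewrite wE ?oner_neq0 ?tofrac_eq0 ?oner_neq0 // psord1 subr0.
Qed.

Lemma w1 : w 1 = 0.
Proof. by rewrite -tofrac1 w_tofrac ?oner_neq0 // psord1. Qed.

Lemma wM (x y : L) : x != 0 -> y != 0 -> w (x * y) = w x + w y.
Proof.
case: (frac_ex x) => a [b [hb ->]]; case: (frac_ex y) => c [d [hd ->]].
rewrite !fr_eq0 // => ha hc.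
rewrite mulf_div -!tofracM !wE ?mulf_neq0 // !psordM //.
lia.
Qed.

Lemma wN (x : L) : w (- x) = w x.
Proof.
case: (frac_ex x) => a [b [hb ->]].
have [->|ha] := eqVneq a 0; first by rewrite tofrac0 mul0r oppr0.
by rewrite -mulNr -tofracN !wE ?oppr_eq0 // psordN.
Qed.

Lemma arith_geD (m : int) (pa pb pc pd q : nat) :
  m <= pa%:Z - pb%:Z -> m <= pc%:Z - pd%:Z -> (minn (pa + pd) (pc + pb) <= q)%N ->
  m <= q%:Z - (pb + pd)%N%:Z.
Proof. move=> *; lia. Qed.

Definition ge (x : L) (m : int) := x != 0 -> m <= w x.

Lemma ge0 m : ge 0 m.
Proof. by rewrite /ge eqxx. Qed.

Lemma ge_w x : ge x (w x).
Proof. by move=> _. Qed.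

Lemma ge_le x m n : n <= m -> ge x m -> ge x n.
Proof. by move=> hnm h hx; apply: le_trans hnm (h hx). Qed.

Lemma geN x m : ge (- x) m = ge x m.
Proof. by rewrite /ge wN oppr_eq0. Qed.

Lemma geD x y m : ge x m -> ge y m -> ge (x + y) m.
Proof.
have [->|hx0] := eqVneq x 0; first by rewrite add0r.
have [->|hy0] := eqVneq y 0; first by rewrite addr0.
move=> /(_ hx0) hx /(_ hy0) hy.
move: hx hy hx0 hy0.
case: (frac_ex x) => a [b [hb ->]]; case: (frac_ex y) => c [d [hd ->]].
rewrite !fr_eq0 // => + + ha hc.
rewrite !wE // => hx hy hs.
move: hs; rewrite addf_div ?tofrac_eq0 // -!tofracM -tofracD fr_eq0 ?mulf_neq0 // => hs.
rewrite wE ?mulf_neq0 //.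
have := psord_add (mulf_neq0 ha hd) (mulf_neq0 hc hb) hs.
rewrite !psordM // => h.
exact: (arith_geD hx hy h).
Qed.

Lemma geM x y m n : ge x m -> ge y n -> ge (x * y) (m + n).
Proof.
move=> hx hy; rewrite /ge mulf_eq0 negb_or => /andP[h1 h2].
rewrite (wM h1 h2); have := hx h1; have := hy h2; lia.
Qed.

Lemma ge_sum (I : Type) (r : seq I) (P : pred I) (f : I -> L) m :
  (forall i, P i -> ge (f i) m) -> ge (\sum_(i <- r | P i) f i) m.
Proof.
move=> h; apply: (big_ind (fun x => ge x m)); [exact: ge0 | move=> x y; exact: geD | exact: h].
Qed.

Lemma geX x m n : ge x m -> ge (x ^+ n) (m *+ n).
Proof.
move=> h; elim: n => [|n ih]; first by rewrite expr0 mulr0n => _; rewrite w1.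
by rewrite exprS mulrS; apply: geM.
Qed.

Lemma ge_tofrac (a : ps) : ge a%:F 0.
Proof.
move=> h; rewrite w_tofrac //; last by apply: contraNneq h => ->; rewrite tofrac0.
Qed.

Lemma ge_tofrac1 (a : ps) : psc a 0 = 0 -> ge a%:F 1.
Proof.
move=> h0 h; have ha : a != 0 by apply: contraNneq h => ->; rewrite tofrac0.
rewrite w_tofrac // lez_nat; apply: psord_ge => // i; rewrite ltnS leqn0 => /eqP ->.
exact: h0.
Qed.


Lemma fr_sub (a b c d : ps) : b != 0 -> d != 0 ->
  a%:F / b%:F - c%:F / d%:F = (a * d - c * b)%:F / (b * d)%:F.
Proof.
move=> hb hd; have hb' : b%:F != 0 by rewrite tofrac_eq0.
have hd' : d%:F != 0 by rewrite tofrac_eq0.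
rewrite -mulNr (addf_div _ _ hb' hd') mulNr.
congr (_ / _); first by rewrite tofracB !tofracM.
by rewrite tofracM.
Qed.

Lemma fr_mul (a b c d : ps) :
  a%:F / b%:F * (c%:F / d%:F) = (a * c)%:F / (b * d)%:F.
Proof. by rewrite mulf_div !tofracM. Qed.

Lemma wX (x : L) n : x != 0 -> w (x ^+ n) = w x *+ n.
Proof.
move=> hx; elim: n => [|n ih]; first by rewrite expr0 w1.
by rewrite exprS wM ?expf_neq0 // ih mulrS.
Qed.

Lemma cstL_w (c : K) : c != 0 -> cstL c != 0 /\ w (cstL c) = 0.
Proof.
move=> hc; have h0 : psc (ps_cst c) 0 != 0 by [].
have hp : ps_cst c != 0 by apply: contraNneq h0 => ->.
rewrite /cstL tofrac_eq0 hp; split => //.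
by rewrite w_tofrac // (@psord_eq _ _ 0%N).
Qed.

Lemma cstL0 : cstL (0 : K) = 0.
Proof.
rewrite /cstL; have -> : ps_cst (0 : K) = 0 by apply: psP => n /=; case: ifP.
exact: tofrac0.
Qed.

Lemma arithN (x : int) (i N : nat) : x <= 0 -> (i <= N)%N -> x *+ N + 1 <= 1 + x *+ i.
Proof. move=> *; nia. Qed.

Lemma ordQ_pos (x : L) : ge x 1 -> ext_gt0 (ordQ x).
Proof.
rewrite /ordQ ordX_w; case: eqP => //= /eqP hx h.
rewrite ltr0z; have := h hx; lia.
Qed.

Lemma arith_mul (p q n : nat) : ((p * n)%N)%:Z - ((q * n)%N)%:Z = (p%:Z - q%:Z) *+ n.
Proof. nia. Qed.

Section SubL.
Variable nu : nat.
Hypothesis nu_gt0 : (0 < nu)%N.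
Local Notation sb := (@ps_subst K nu).
Local Notation sg := (@substX K nu).

Lemma substE (a b : ps) : b != 0 -> sg (a%:F / b%:F) = (sb a)%:F / (sb b)%:F.
Proof.
move=> hb; rewrite /substX; have h := repr_rel a hb.
set n := \n_(repr _) in h *; set d := \d_(repr _) in h *.
have hd : d != 0 by apply: reprd.
apply/eqP; rewrite eqr_div ?tofrac_eq0 ?subst_eq0 //.
by rewrite -!tofracM -!substM // h mulrC.
Qed.

Lemma sg_zmod : zmod_morphism sg.
Proof.
move=> x y.
case: (frac_ex x) => a [b [hb ->]]; case: (frac_ex y) => c [d [hd ->]].
rewrite fr_sub // !substE ?mulf_neq0 // fr_sub ?subst_eq0 //.
by rewrite substD // substN // !substM.
Qed.

Lemma sg_monoid : monoid_morphism sg.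
Proof.
split.
  have -> : (1 : L) = 1%:F / 1%:F by rewrite tofrac1 divr1.
  by rewrite substE ?oner_neq0 // subst1.
move=> x y.
case: (frac_ex x) => a [b [hb ->]]; case: (frac_ex y) => c [d [hd ->]].
by rewrite fr_mul !substE ?mulf_neq0 // fr_mul !substM.
Qed.

HB.instance Definition _ := GRing.isZmodMorphism.Build L L sg sg_zmod.
HB.instance Definition _ := GRing.isMonoidMorphism.Build L L sg sg_monoid.

Lemma w_sg (x : L) : x != 0 -> sg x != 0 /\ w (sg x) = w x *+ nu.
Proof.
case: (frac_ex x) => a [b [hb ->]]; rewrite fr_eq0 // => ha.
rewrite substE // fr_eq0 ?subst_eq0 // ha; split => //.
rewrite !wE ?subst_eq0 // !psord_subst //; exact: arith_mul.
Qed.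

Lemma ge_sg (x : L) m : 0 <= m -> ge x m -> ge (sg x) m.
Proof.
move=> hm h hs; have hx : x != 0 by apply: contraNneq hs => ->; rewrite rmorph0.
have [_ ->] := w_sg hx; have := h hx.
case: nu nu_gt0 => // n _; rewrite mulrS => hle.
by rewrite -[m]addr0 lerD // mulrn_wge0 // (le_trans hm hle).
Qed.

Lemma root_pos (F : {poly L}) N Fs Phi z :
  k_distinguished F N -> factorization F (lead_coef F) Fs -> Phi \in Fs ->
  root (map_poly sg Phi) z -> ge z 1.
Proof.
move=> [hsz [[F0 [hF0 hlc]] hcoef]] [hfac _] hPhi hroot.
have hFz : (map_poly sg F).[z] = 0.
  rewrite hfac (big_rem _ hPhi) /= map_polyZ rmorphM hornerZ hornerM (rootP hroot).
  by rewrite mul0r mulr0.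
have hFN : F`_N = cstL F0 by rewrite -hlc lead_coefE hsz.
move: hFz; rewrite horner_coef size_map_poly hsz big_ord_recr /= coef_map /= hFN.
move=> hFz hz; rewrite leNgt; apply/negP => hlt.
have hwz : w z <= 0 by lia.
have [hc0 hcw] := cstL_w hF0; have [hs0 hsw] := w_sg hc0.
rewrite hcw mul0rn in hsw.
set t := sg (cstL F0) * z ^+ N in hFz.
have ht0 : t != 0 := mulf_neq0 hs0 (expf_neq0 _ hz).
have hwt : w t = w z *+ N by rewrite (wM hs0 (expf_neq0 _ hz)) hsw (wX _ hz) add0r.
have hrest : ge (\sum_(i < N) (map_poly sg F)`_i * z ^+ i) (w z *+ N + 1).
  apply: ge_sum => i _; rewrite coef_map /=.
  have hi := hcoef i (ltn_ord i); rewrite ordX_w in hi.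
  case: eqP hi => [->|/eqP hne] hi; first by rewrite rmorph0 mul0r; apply: ge0.
  have hFi : ge F`_i 1 by move=> _; lia.
  apply: ge_le (arithN hwz (ltnW (ltn_ord i))) _.
  by apply: geM; [apply: ge_sg | apply: geX; apply: ge_w].
move/eqP: hFz; rewrite addrC addr_eq0 => /eqP e.
move: hrest; rewrite -geN -e => /(_ ht0); rewrite hwt.
set s := w z *+ N; lia.
Qed.

Lemma G_pos (G : {poly L}) z :
  in_psXY G -> vanishes_at_origin G -> ge z 1 -> ge ((map_poly sg G).[z]) 1.
Proof.
move=> hG [a [ha0 ha]] hz.
rewrite horner_coef size_map_poly.
case: (size G) => [|n]; first by rewrite big_ord0; apply: ge0.
rewrite big_ord_recl /= coef_map /= ha0 expr0 mulr1.
apply: geD.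
  by apply: ge_sg; [exact: ler01 | exact: ge_tofrac1].
apply: ge_sum => i _; rewrite coef_map /=.
case: (hG (lift ord0 i)) => b ->.
have h1 : (1 : int) <= 0 + 1 *+ (lift ord0 i) by rewrite /= /bump leq0n add1n; lia.
apply: ge_le h1 _; apply: geM; [apply: ge_sg; [exact: lexx | exact: ge_tofrac] | exact: geX].
Qed.

Lemma sg1 : sg 1 = 1.
Proof. exact: rmorph1. Qed.

Lemma size_map_sg (p : {poly L}) : size (map_poly sg p) = size p.
Proof. exact: size_map_poly. Qed.

End SubL.
End Lau.

Section Fin.
Variable K : idomainType.
Local Notation L := (laurent K).

Lemma ext_add_gt0 u v : ext_gt0 u -> ext_ge0 v -> ext_gt0 (ext_add u v).
Proof. by case: u => [a|] //; case: v => [b|] //= ha hb; rewrite ltr_wpDr. Qed.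

Lemma ext_sum_ge0 s : all ext_ge0 s -> ext_ge0 (ext_sum s).
Proof.
elim: s => [|u s ih] //= /andP[hu hs]; have := ih hs.
by case: u hu => [a|] //; case: (ext_sum s) => [b|] //= ha hb; rewrite addr_ge0.
Qed.

Lemma ext_sum_gt0 s : all ext_gt0 s -> s != [::] -> ext_gt0 (ext_sum s).
Proof.
case: s => [|u s] //= /andP[hu hs] _; apply: ext_add_gt0 => //.
apply: ext_sum_ge0; apply/allP => v /(allP hs); case: v => //= a; exact: ltW.
Qed.

Lemma intm_pos (F G : {poly L}) N Fs Phi :
  k_distinguished F N -> in_psXY G -> vanishes_at_origin G ->
  factorization F (lead_coef F) Fs -> Phi \in Fs -> ext_gt0 (intm Phi G).
Proof.
move=> hF hG hG0 hfac hPhi.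
have [hmon hirr] := (proj2 hfac) Phi hPhi.
have hsz : (1 < size Phi)%N by case: hirr.
rewrite /intm; case: eqP => [_|hG'].
  by rewrite leqNgt hsz.
case: pselect => [h|//].
case: (cid h) => [[nu zs] [hnu hpr]] /=.
have hl1 : lead_coef Phi = 1 by apply/eqP.
have ho1 : ordQ (lead_coef Phi) = Some 0.
  by rewrite hl1 /ordQ ordX_w oner_eq0 w1.
rewrite ho1 mulr0.
move: hpr; rewrite hl1 (@sg1 K nu hnu) scale1r => hpr.
have hzs : zs != [::].
  apply/eqP => hz; have := congr1 (fun p : {poly L} => size p) hpr.
  rewrite hz big_nil (@size_map_sg K nu hnu) size_poly1 => e; by rewrite e in hsz.
have hall : all ext_gt0 [seq ordQ ((map_poly (substX nu) G).[z]) | z <- zs].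
  apply/allP => u /mapP [z hz ->]; apply: ordQ_pos.
  apply: (@G_pos K nu hnu) => //; apply: (@root_pos K nu hnu F N Fs Phi z hF hfac hPhi).
  by rewrite hpr root_prod_XsubC.
have hne : [seq ordQ ((map_poly (substX nu) G).[z]) | z <- zs] != [::].
  by move: hzs; case: (zs).
have := ext_sum_gt0 hall hne.
case: ext_sum => [s|] //= hs.
by rewrite add0r divr_gt0 // ltr0n.
Qed.

Lemma res_pos (Phi G : {poly L}) lam :
  ext_gt0 (intm Phi G) -> res Phi G = Some lam -> lam = 0.
Proof.
move=> hpos; rewrite /res; case: ifP => // _.
case: pselect => // h [<-]; case: (cid h) => lam0 [hP huniq] /=.
by apply: huniq; rewrite cstL0 polyC0 subr0.
Qed.

End Fin.

Local Close Scope quotient_scope.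

Theorem mainTheorem4 (k : closedFieldType) (Hchar : [pchar k] =i pred0)
    (F G : {poly laurent k}) (N : nat) (Fs : seq {poly laurent k}) :
  k_distinguished F N ->
  in_psXY G -> vanishes_at_origin G ->
  factorization F (lead_coef F) Fs ->
  (forall lam : k, lam \in alpha Fs G -> lam = 0) /\ beta Fs G = Some 0.
Proof.
move=> hF hG hG0 hfac.
have key : forall lam : k, lam \in alpha Fs G -> lam = 0.
  move=> lam; rewrite /alpha mem_undup mem_pmap => /mapP [Phi hPhi hres].
  apply: (res_pos (intm_pos hF hG hG0 hfac hPhi)).
  by rewrite hres.
split => //.
rewrite /beta (eq_in_filter (a2 := pred0)); first by rewrite filter_pred0.
by move=> lam /key -> /=; rewrite eqxx.
Qed.
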